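(* Let $G$ be a periodic group such that the set of primes dividing the orders of elements of $G$ is exactly $\{2,3\}$, for any two elements $g,h\in G$ of orders at most $4$ the order of $gh$ is at most $9$, and the centralizer of every involution of $G$ is a locally cyclic $2$-group. Let $a,b\in\Gamma_2(G)$. Then $(ab)^9=1$. In particular, $G$ has a single conjugacy class of involutions, and $\Gamma_2(G)=a^G=a^{\Gamma_2(G)}$.
   Context: For a positive integer $n$, $\Gamma_n(G)$ denotes the set of elements of $G$ of order exactly $n$. For $a\in G$ and a subset $X\subseteq G$, $a^X=\{x^{-1}ax \mid x\in X\}$. *)

(* Defs.v *)
From Stdlib Require Import ZArith List Znumtheory.
Import ListNotations.

Record Group : Type := {
  carrier :> Type;
  gmul : carrier -> carrier -> carrier;
  ginv : carrier -> carrier;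
  gone : carrier;
  gmul_assoc : forall x y z, gmul x (gmul y z) = gmul (gmul x y) z;
  gmul_1l : forall x, gmul gone x = x;
  gmul_Vl : forall x, gmul (ginv x) x = gone
}.

Arguments gmul {g}.
Arguments ginv {g}.
Arguments gone {g}.

Fixpoint gpow {G : Group} (g : G) (n : nat) : G :=
  match n with
  | O => gone
  | S m => gmul g (gpow g m)
  end.

Definition zpow {G : Group} (g : G) (k : Z) : G :=
  match k with
  | Z0 => gone
  | Zpos p => gpow g (Pos.to_nat p)
  | Zneg p => ginv (gpow g (Pos.to_nat p))
  end.

Definition has_order {G : Group} (g : G) (n : nat) : Prop :=
  (0 < n)%nat /\ gpow g n = gone /\ (forall m, (0 < m < n)%nat -> gpow g m <> gone).

Definition Gamma {G : Group} (n : nat) (g : G) : Prop := has_order g n.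

Definition periodic (G : Group) : Prop :=
  forall g : G, exists n, (0 < n)%nat /\ gpow g n = gone.

Inductive gen {G : Group} (S : list G) : G -> Prop :=
  | gen_in : forall x, In x S -> gen S x
  | gen_one : gen S gone
  | gen_mul : forall x y, gen S x -> gen S y -> gen S (gmul x y)
  | gen_inv : forall x, gen S x -> gen S (ginv x).

Definition conjg {G : Group} (a x : G) : G := gmul (ginv x) (gmul a x).

Definition centralizer {G : Group} (a : G) (x : G) : Prop := gmul x a = gmul a x.

Definition locally_cyclic {G : Group} (H : G -> Prop) : Prop :=
  forall S : list G, Forall H S ->
    exists c, gen S c /\ forall x, gen S x -> exists k : Z, x = zpow c k.

Definition is_2group {G : Group} (H : G -> Prop) : Prop :=
  forall x, H x -> exists k, has_order x (2 ^ k)%nat.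

Definition prime_spectrum (G : Group) (p : nat) : Prop :=
  prime (Z.of_nat p) /\ exists (g : G) n, has_order g n /\ Nat.divide p n.

(* Main.v *)
Require Import Defs.
From Stdlib Require Import ZArith List.
From Stdlib Require Import Znumtheory Lia Classical.

Lemma p5 : prime 5. Proof. apply prime_alt; split; [lia|]. intros n Hn [q Hq].
assert (n = 2 \/ n = 3 \/ n = 4)%Z as H by lia; destruct H as [H|[H|H]]; subst; lia. Qed.
Lemma p7 : prime 7. Proof. apply prime_alt; split; [lia|]. intros n Hn [q Hq].
assert (n = 2 \/ n = 3 \/ n = 4 \/ n = 5 \/ n = 6)%Z as H by lia; destruct H as [H|[H|[H|[H|H]]]]; subst; lia. Qed.

Import ListNotations.
Local Open Scope nat_scope.

Section GL.
Variable G : Group.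
Implicit Types x y z : G.

Lemma mulV x : gmul x (ginv x) = gone.
Proof.
  rewrite <- (gmul_1l G (gmul x (ginv x))).
  rewrite <- (gmul_Vl G (ginv x)) at 1.
  rewrite <- gmul_assoc. rewrite (gmul_assoc G (ginv x) x (ginv x)).
  rewrite gmul_Vl, gmul_1l. apply gmul_Vl.
Qed.

Lemma mul1 x : gmul x gone = x.
Proof. rewrite <- (gmul_Vl G x), gmul_assoc, mulV. apply gmul_1l. Qed.

Lemma inv_uniq x y : gmul x y = gone -> ginv x = y.
Proof.
  intro H. rewrite <- (mul1 (ginv x)), <- H, gmul_assoc, gmul_Vl. apply gmul_1l.
Qed.

Lemma inv_mul x y : ginv (gmul x y) = gmul (ginv y) (ginv x).
Proof.
  apply inv_uniq. rewrite <- gmul_assoc, (gmul_assoc G y), mulV, gmul_1l. apply mulV.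
Qed.

Lemma inv_one : ginv (@gone G) = gone.
Proof. apply inv_uniq, gmul_1l. Qed.

Lemma gpow_add (g : G) m n : gpow g (m + n) = gmul (gpow g m) (gpow g n).
Proof.
  induction m; simpl. now rewrite gmul_1l. now rewrite IHm, gmul_assoc.
Qed.

Lemma gpow_one_n n : gpow (@gone G) n = gone.
Proof. induction n; simpl; auto. rewrite IHn. apply gmul_1l. Qed.

Lemma gpow_mul (g : G) m n : gpow g (m * n) = gpow (gpow g m) n.
Proof.
  induction n; simpl. now rewrite Nat.mul_0_r.
  rewrite Nat.mul_succ_r, gpow_add, IHn.
  (* gpow(g^m) n * g^m = g^m * gpow(g^m) n *)
  clear IHn. induction n; simpl. now rewrite gmul_1l, mul1.
  rewrite <- gmul_assoc, IHn. reflexivity.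
Qed.

Lemma gpow_comm (g : G) n : gmul g (gpow g n) = gmul (gpow g n) g.
Proof.
  replace (gmul g (gpow g n)) with (gpow g (1 + n)) by (simpl; reflexivity).
  rewrite Nat.add_comm, gpow_add. simpl. now rewrite mul1.
Qed.

Lemma invol x : Gamma 2 x -> gmul x x = gone /\ ginv x = x /\ x <> gone.
Proof.
  intros [_ [H1 H2]]. simpl in H1. rewrite mul1 in H1.
  split; [auto|split]. apply inv_uniq; auto.
  intro E. apply (H2 1); [lia|]. simpl. rewrite mul1; auto.
Qed.

Lemma mk_invol x : gmul x x = gone -> x <> gone -> Gamma 2 x.
Proof.
  intros H1 H2. split; [lia|split]. simpl; now rewrite mul1.
  intros m Hm. assert (m = 1) by lia. subst. simpl. now rewrite mul1.
Qed.

Lemma refl_pow x y n : gmul x x = gone -> gmul y y = gone ->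
  gmul x (gmul (gpow (gmul x y) n) x) = ginv (gpow (gmul x y) n).
Proof.
  intros Hx Hy. induction n; simpl.
  - now rewrite gmul_1l, Hx, inv_one.
  - set (p := gpow (gmul x y) n) in *. set (r := gmul x y) in *.
    assert (Hr : ginv r = gmul x (gmul r x)).
    { subst r. apply inv_uniq. rewrite <- !gmul_assoc. rewrite (gmul_assoc G x x), Hx, gmul_1l.
      rewrite (gmul_assoc G y y), Hy, gmul_1l. exact Hx. }
    assert (Hc : gmul r p = gmul p r) by (subst p; apply gpow_comm).
    rewrite inv_mul, <- IHn, Hr.
    rewrite <- !gmul_assoc. f_equal.
    rewrite (gmul_assoc G x x), Hx, gmul_1l.
    rewrite !gmul_assoc, Hc. reflexivity.
Qed.

Lemma conj_invol a x : Gamma 2 a -> Gamma 2 (conjg a x).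
Proof.
  intros Ha. destruct (invol a Ha) as [H1 [_ H3]]. unfold conjg.
  apply mk_invol.
  - rewrite <- !gmul_assoc. rewrite (gmul_assoc G x (ginv x)), mulV, gmul_1l.
    rewrite (gmul_assoc G a a), H1, gmul_1l. apply gmul_Vl.
  - intro E. apply H3.
    assert (E2 : gmul x (gmul (ginv x) (gmul a x)) = gmul x gone) by now rewrite E.
    rewrite gmul_assoc, mulV, gmul_1l, mul1 in E2.
    assert (E3 : gmul (gmul a x) (ginv x) = gmul x (ginv x)) by now rewrite E2.
    rewrite <- gmul_assoc, mulV, mul1 in E3. exact E3.
Qed.


Lemma gen_V a z : gmul a a = gone -> gmul z z = gone -> gmul a z = gmul z a ->
  forall c, gen [a; z] c ->
  c = gone \/ c = a \/ c = z \/ c = gmul a z.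
Proof.
  intros Ha Hz Haz.
  assert (e1 : gmul a (gmul a z) = z) by (now rewrite gmul_assoc, Ha, gmul_1l).
  assert (e2 : gmul (gmul a z) a = z) by (now rewrite <- gmul_assoc, <- Haz, gmul_assoc, Ha, gmul_1l).
  assert (e3 : gmul z (gmul a z) = a) by (now rewrite gmul_assoc, <- Haz, <- gmul_assoc, Hz, mul1).
  assert (e4 : gmul (gmul a z) z = a) by (now rewrite <- gmul_assoc, Hz, mul1).
  assert (e5 : gmul (gmul a z) (gmul a z) = gone) by (now rewrite gmul_assoc, e2).
  assert (e6 : gmul z a = gmul a z) by auto.
  induction 1.
  - simpl in H. intuition.
  - auto.
  - destruct IHgen1 as [E|[E|[E|E]]]; destruct IHgen2 as [F|[F|[F|F]]]; subst;
      rewrite ?gmul_1l, ?mul1, ?Ha, ?Hz, ?e1, ?e2, ?e3, ?e4, ?e5, ?e6; tauto.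
  - destruct IHgen as [E|[E|[E|E]]]; subst.
    + left; apply inv_one.
    + right; left; apply inv_uniq; auto.
    + right; right; left; apply inv_uniq; auto.
    + right; right; right; apply inv_uniq; auto.
Qed.

Lemma zpow_invol (c : G) k : gmul c c = gone -> zpow c k = gone \/ zpow c k = c.
Proof.
  intro Hc.
  assert (forall n, gpow c n = gone \/ gpow c n = c).
  { induction n; simpl; auto. destruct IHn as [E|E]; rewrite E; [right; apply mul1|left; auto]. }
  destruct k; simpl; auto.
  destruct (H (Pos.to_nat p)) as [E|E]; rewrite E; [left; apply inv_one|right; apply inv_uniq; auto].
Qed.

Lemma even_case
  (Hcent : forall t : G, Gamma 2 t ->
           locally_cyclic (centralizer t) /\ is_2group (centralizer t))
  x y m : Gamma 2 x -> Gamma 2 y -> 1 <= m -> has_order (gmul x y) (2 * m) -> False.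
Proof.
  intros Hx Hy Hm [_ [Hk1 Hk3]].
  destruct (invol x Hx) as [xx [xi xn]]. destruct (invol y Hy) as [yy [yi yn]].
  set (r := gmul x y) in *. set (z := gpow r m).
  assert (zz : gmul z z = gone).
  { replace (2 * m) with (m * 2) in Hk1 by lia. rewrite gpow_mul in Hk1. simpl in Hk1.
    rewrite mul1 in Hk1. exact Hk1. }
  assert (zn : z <> gone) by (apply Hk3; lia).
  assert (Hz : Gamma 2 z) by (apply mk_invol; auto).
  assert (xzx : gmul x (gmul z x) = z).
  { unfold z, r. rewrite refl_pow; auto. apply inv_uniq. exact zz. }
  assert (xz : gmul x z = gmul z x).
  { rewrite <- xzx at 2. rewrite <- !gmul_assoc, xx, mul1. reflexivity. }
  destruct (Hcent z Hz) as [Hlc _].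
  destruct (Hlc [x; z]) as [c [Hc Hall]].
  { constructor. exact xz. constructor. reflexivity. constructor. }
  assert (cc : gmul c c = gone).
  { destruct (gen_V x z xx zz xz c Hc) as [E|[E|[E|E]]]; subst c; auto.
    - apply gmul_1l.
    - rewrite <- !gmul_assoc, (gmul_assoc G z x z), <- xz, <- gmul_assoc, zz, mul1; exact xx. }
  assert (xc : x = c).
  { destruct (Hall x (gen_in [x; z] x (or_introl eq_refl))) as [k E].
    destruct (zpow_invol c k cc) as [F|F]; rewrite F in E; [contradiction|auto]. }
  assert (zc : z = c).
  { destruct (Hall z (gen_in [x; z] z (or_intror (or_introl eq_refl)))) as [k E].
    destruct (zpow_invol c k cc) as [F|F]; rewrite F in E; [contradiction|auto]. }
  assert (xeq : x = z) by congruence.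
  assert (rx : gmul r x = gmul x r) by (rewrite xeq; unfold z; apply gpow_comm).
  assert (xrx : gmul x (gmul r x) = ginv r).
  { pose proof (refl_pow x y 1 xx yy) as P. simpl in P. rewrite mul1 in P. exact P. }
  rewrite rx, gmul_assoc, xx, gmul_1l in xrx.
  assert (rr : gmul r r = gone) by (rewrite xrx at 2; apply mulV).
  destruct (Nat.eq_dec m 1) as [->|Hm1].
  - assert (x = r) by (rewrite xeq; unfold z; simpl; apply mul1).
    apply yn. unfold r in H.
    assert (gmul (ginv x) x = gmul (ginv x) (gmul x y)) by (f_equal; exact H).
    rewrite gmul_assoc, gmul_Vl, gmul_1l in H0. auto.
  - apply (Hk3 2). lia. simpl. rewrite mul1. exact rr.
Qed.

Lemma ord9
  (Hspec : forall p : nat, prime_spectrum G p <-> (p = 2 \/ p = 3))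
  (H49 : forall (g h : G) (m n : nat), has_order g m -> has_order h n ->
           (m <= 4)%nat -> (n <= 4)%nat ->
           exists k, has_order (gmul g h) k /\ (k <= 9)%nat)
  (Hcent : forall t : G, Gamma 2 t ->
           locally_cyclic (centralizer t) /\ is_2group (centralizer t))
  x y : Gamma 2 x -> Gamma 2 y -> gpow (gmul x y) 9 = gone.
Proof.
  intros Hx Hy.
  destruct (H49 x y 2 2 Hx Hy ltac:(lia) ltac:(lia)) as [k [Hk Hk9]].
  assert (odd : forall q, k * q = 9 -> gpow (gmul x y) 9 = gone).
  { intros q Hq. rewrite <- Hq, gpow_mul. destruct Hk as [_ [E _]]. rewrite E. apply gpow_one_n. }
  assert (ev : forall m, 1 <= m -> k = 2 * m -> False).
  { intros m Hm E. subst k. exact (even_case Hcent x y m Hx Hy Hm Hk). }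
  assert (np : forall p, prime (Z.of_nat p) -> k = p -> p = 2 \/ p = 3).
  { intros p Hp E. apply Hspec. split; auto. exists (gmul x y), k. split; auto. subst; apply Nat.divide_refl. }
  destruct Hk as [Hk0 Hk'].
  assert (k = 1 \/ k = 2 \/ k = 3 \/ k = 4 \/ k = 5 \/ k = 6 \/ k = 7 \/ k = 8 \/ k = 9) as HH by lia.
  destruct HH as [E|[E|[E|[E|[E|[E|[E|[E|E]]]]]]]].
  - apply (odd 9); lia.
  - exfalso; apply (ev 1); lia.
  - apply (odd 3); lia.
  - exfalso; apply (ev 2); lia.
  - exfalso. pose proof (np 5 p5 E). lia.
  - exfalso; apply (ev 3); lia.
  - exfalso. pose proof (np 7 p7 E). lia.
  - exfalso; apply (ev 4); lia.
  - apply (odd 1); lia.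
Qed.

Lemma conj_sol x y : Gamma 2 x -> Gamma 2 y -> gpow (gmul x y) 9 = gone ->
  y = conjg x (gpow (gmul x y) 5).
Proof.
  intros Hx Hy H9.
  destruct (invol x Hx) as [xx [xi xn]]. destruct (invol y Hy) as [yy [yi yn]].
  pose proof (refl_pow x y 5 xx yy) as P.
  set (z := gpow (gmul x y) 5) in *. unfold conjg. rewrite <- P.
  rewrite <- !gmul_assoc. rewrite (gmul_assoc G x x), xx, gmul_1l.
  assert (gmul z z = gmul x y).
  { unfold z. rewrite <- gpow_add. change (5+5) with (9+1). rewrite gpow_add, H9, gmul_1l.
    simpl. apply mul1. }
  rewrite H, gmul_assoc, xx. symmetry; apply gmul_1l.
Qed.

End GL.

Theorem lemma1 (G : Group)
  (Hper : periodic G)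
  (Hspec : forall p : nat, prime_spectrum G p <-> (p = 2 \/ p = 3))
  (H49 : forall (g h : G) (m n : nat), has_order g m -> has_order h n ->
           (m <= 4)%nat -> (n <= 4)%nat ->
           exists k, has_order (gmul g h) k /\ (k <= 9)%nat)
  (Hcent : forall t : G, Gamma 2 t ->
           locally_cyclic (centralizer t) /\ is_2group (centralizer t))
  (a b : G) (Ha : Gamma 2 a) (Hb : Gamma 2 b) :
  gpow (gmul a b) 9 = gone /\
  (forall x y : G, Gamma 2 x -> Gamma 2 y -> exists z : G, y = conjg x z) /\
  (forall y : G, Gamma 2 y <-> exists x : G, y = conjg a x) /\
  (forall y : G, Gamma 2 y <-> exists x : G, Gamma 2 x /\ y = conjg a x).
Proof.
  assert (O9 : forall x y : G, Gamma 2 x -> Gamma 2 y -> gpow (gmul x y) 9 = gone)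
    by (intros; apply ord9; auto).
  assert (C2 : forall x y : G, Gamma 2 x -> Gamma 2 y -> exists z : G, y = conjg x z).
  { intros x y Hx Hy. exists (gpow (gmul x y) 5). apply conj_sol; auto. }
  split; [apply O9; auto|]. split; [exact C2|]. split.
  - intro y; split; [intro Hy; apply C2; auto|intros [x ->]; apply conj_invol; auto].
  - intro y; split; [|intros [x [_ ->]]; apply conj_invol; auto].
    intro Hy. pose proof (O9 a y Ha Hy) as H9.
    destruct (invol G a Ha) as [aa [ai an]].
    destruct (invol G y Hy) as [yy [yi yn]].
    pose proof (refl_pow G a y 5 aa yy) as P.
    pose proof (conj_sol G a y Ha Hy H9) as Cy.
    set (z := gpow (gmul a y) 5) in *.
    assert (zz : gmul z z = gmul a y).
    { unfold z. rewrite <- gpow_add. change (5+5) with (9+1). rewrite gpow_add, H9, gmul_1l.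
      simpl. apply mul1. }
    destruct (classic (gmul a z = gone)) as [E|E].
    + assert (za : z = a) by (rewrite <- (inv_uniq G a z E); exact ai).
      rewrite za, aa in zz.
      assert (y = a).
      { symmetry in zz. rewrite <- (inv_uniq G a y zz). exact ai. }
      rewrite H. exists a. split; auto. unfold conjg. rewrite ai, gmul_assoc, aa. symmetry; apply gmul_1l.
    + exists (gmul a z). split.
      * apply mk_invol; auto.
        rewrite (gmul_assoc G (gmul a z) a z), <- (gmul_assoc G a z a), P. apply gmul_Vl.
      * rewrite Cy. unfold conjg. rewrite inv_mul, ai.
        rewrite <- !gmul_assoc. rewrite (gmul_assoc G a a), aa, gmul_1l. reflexivity.
Qed.
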